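(* Let $q\in X^*\setminus\{e\}$ and let $q_0$ be the shortest word in $P_q$. If $|q_0|$ does not divide $|q|$ and $|q_0|\le|q|/2$, then there exists $q'\in X^*\setminus\{e\}$ with $P_q^*\subsetneq P_{q'}^*$. Consequently, if $|q_0|$ does not divide $|q|$ and $P_q^*$ is maximal with respect to inclusion in the class $\{P_{q'}^*: q'\in X^*\setminus\{e\}\}$, then $|q_0|>|q|/2$.
   Context: $X$ is a finite alphabet; $X^*$ the finite words (empty word $e$); $|w|$ is length; $w\sqsubseteq\eta$ means $w$ is a prefix of $\eta$, $w\sqsubset\eta$ a proper prefix. For $q\in X^*\setminus\{e\}$, $P_q:=\{v: e\sqsubset v\sqsubseteq q\sqsubset v\cdot q\}$; $q_0$ is its shortest element. $L^*=\bigcup_{i\in\mathbb{N}}L^i$. *)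

(* Defs.v *)
From mathcomp Require Import all_boot.
Set Implicit Arguments. Unset Strict Implicit. Unset Printing Implicit Defensive.

Definition pprefix (X : eqType) (w eta : seq X) : bool :=
  prefix w eta && (w != eta).

Definition Pset (X : eqType) (q : seq X) : pred (seq X) :=
  fun v => [&& pprefix [::] v, prefix v q & pprefix q (v ++ q)].

Definition star (X : eqType) (L : pred (seq X)) (w : seq X) : Prop :=
  exists ws : seq (seq X), all L ws /\ flatten ws = w.

Definition lang_subset (X : eqType) (A B : seq X -> Prop) : Prop :=
  forall w, A w -> B w.

(* Main.v *)
Require Import Defs.
From Stdlib Require Import Lia.
From mathcomp Require Import all_boot.
Set Implicit Arguments. Unset Strict Implicit.

Ltac slia := repeat match goal with
  | H : is_true (_ <= _) |- _ => move/leP: H => H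
  end;
  try (apply/leP); unfold addn, subn, muln in *;
  repeat match goal with x := ?b |- _ =>
    let E := fresh "E" in have E : x = b by []; try rewrite -E; clearbody x end;
  repeat match goal with
  | H : context [@size ?T ?s] |- _ => let k := fresh "k" in
      set k := @size T s in * ; clearbody k
  | |- context [@size ?T ?s] => let k := fresh "k" in
      set k := @size T s in * ; clearbody k
  end; lia.

Definition per {X : Type} (x0 : X) (s : seq X) (t : nat) :=
  forall i, i + t < size s -> nth x0 s (i + t) = nth x0 s i.

Lemma PsetP (X : eqType) (x0 : X) (s v : seq X) :
  Pset s v <-> [/\ 0 < size v, size v <= size s, v = take (size v) s & per x0 s (size v)].
Proof.
rewrite /Pset /pprefix; split.
- case/and3P => /andP[_ nv] pv /andP[pq _].
  have sv : 0 < size v by case: v nv pv pq.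
  move: pv; rewrite prefixE => /eqP hv.
  have le : size v <= size s.
    have := congr1 size hv; rewrite size_take_min => e.
    by rewrite -{1}e geq_minr.
  split=> //.
  move=> i hi; move: pq; rewrite prefixE => /eqP hq.
  have : nth x0 (take (size s) (v ++ s)) (i + size v) = nth x0 s (i + size v) by rewrite hq.
  by rewrite nth_take // nth_cat ltnNge leq_addl /= addnK => ->.
- case=> sv le hv hp; apply/and3P; split.
  + by rewrite prefix0s /=; case: v sv {hv hp le}.
  + by rewrite prefixE -hv.
  + apply/andP; split.
    * rewrite prefixE; apply/eqP.
      have e : size (take (size s) (v ++ s)) = size s.
        by rewrite size_take_min size_cat; apply/minn_idPl; rewrite leq_addl.
      apply: (eq_from_nth (x0:=x0)) => [//|i]; rewrite e => hi.
      rewrite nth_take // nth_cat; case: ltnP => h.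
        by rewrite hv nth_take.
      by have := hp (i - size v); rewrite subnK // => /(_ hi) ->.
    * apply/eqP => e; have := congr1 size e; rewrite size_cat => e2.
      move/eqP: e2; rewrite -{1}(add0n (size s)) eqn_add2r eq_sym => /eqP h.
      by rewrite h in sv.
Qed.

Lemma Pset_take (X : eqType) (x0 : X) (s : seq X) t :
  0 < t -> t <= size s -> per x0 s t -> Pset s (take t s).
Proof.
move=> h1 h2 h3; apply/(@PsetP _ x0); rewrite size_take_min (minn_idPl h2); split => //.
Qed.

Lemma per_sub (X : Type) (x0 : X) s p t :
  per x0 s p -> per x0 s t -> p <= t -> t <= size s - p -> per x0 s (t - p).
Proof.
move=> hp ht le1 le2 i hi.
case: (ltnP i p) => hip.
- have h : i + t < size s by slia.
  rewrite -(hp (i + (t - p))); last by slia.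
  have -> : i + (t - p) + p = i + t by slia.
  by rewrite ht.
- have -> : i + (t - p) = i - p + t by slia.
  rewrite ht; last by slia.
  by rewrite -(hp (i - p)) ?subnK //; slia.
Qed.

Lemma star_cat (X : eqType) (L : pred (seq X)) a b :
  star L a -> star L b -> star L (a ++ b).
Proof.
case=> wa [ha <-] [wb [hb <-]]; exists (wa ++ wb); split.
  by rewrite all_cat ha hb.
by rewrite flatten_cat.
Qed.

Lemma lemma4_eq (X : eqType) (q q0 : seq X) :
  q != [::] ->
  Pset q q0 ->
  (forall v, Pset q v -> size q0 <= size v) ->
  ~~ (size q0 %| size q) ->
  ((2 * size q0 <= size q ->
      exists q' : seq X, q' != [::] /\
        lang_subset (star (Pset q)) (star (Pset q')) /\
        exists w, star (Pset q') w /\ ~ star (Pset q) w)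
   /\
   ((forall q' : seq X, q' != [::] ->
       lang_subset (star (Pset q)) (star (Pset q')) ->
       lang_subset (star (Pset q')) (star (Pset q))) ->
    size q < 2 * size q0)).
Proof.
move=> qn hq0 hmin hndiv.
have [x0 _] : exists x0 : X, True by case: q qn {hq0 hmin hndiv} => // x _; exists x.
set n := size q in hndiv *; set p := size q0 in hmin hndiv *.
case/(@PsetP _ x0): hq0 => p0 pn q0e pp; rewrite -/p -/n in p0 pn q0e pp.
have minp : forall t, 0 < t -> t <= n -> per x0 q t -> p <= t.
  move=> t t0 tn pt; have := hmin _ (Pset_take t0 tn pt).
  by rewrite size_take_min (minn_idPl tn).
have mult : forall t, 0 < t -> t <= n - p -> per x0 q t -> p %| t.
  move=> t; elim: t {-2}t (leqnn t) => [|m IH] t tm t0 tnp pt.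
    by move: t0; rewrite leqn0 in tm; rewrite (eqP tm).
  have pt' : p <= t by apply: minp => //; slia.
  case: (ltnP p t) => hpt.
    have : p %| t - p.
      apply: IH; first by slia. by slia. by slia.
      by apply: per_sub.
    by rewrite -{2}(subnK pt') dvdn_addl.
  by have -> : t = p by slia.
have part1 : 2 * p <= n -> exists q' : seq X, q' != [::] /\
        lang_subset (star (Pset q)) (star (Pset q')) /\
        exists w, star (Pset q') w /\ ~ star (Pset q) w.
  move=> h2.
  set q' := take (n - p) q.
  have sq' : size q' = n - p by rewrite size_take_min; apply/minn_idPl; slia.
  have nthq' : forall i, i < n - p -> nth x0 q' i = nth x0 q i.
    by move=> i hi; rewrite nth_take.
  have q'n : q' != [::] by rewrite -size_eq0 sq'; apply/eqP; slia.
  have Pq0 : Pset q' q0.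
    rewrite q0e.
    have -> : take p q = take p q' by rewrite take_takel //; slia.
    apply: (Pset_take (x0:=x0)) => //; first by rewrite sq'; slia.
    move=> i; rewrite sq' => hi.
    rewrite nthq'; last by slia. rewrite nthq'; last first. by slia. by apply: pp; slia.
  have Prest : forall t, p < t -> t <= n -> per x0 q t -> Pset q' (take (t - p) q').
    move=> t k1 k2 k3; apply: (Pset_take (x0:=x0)); first by slia. by rewrite sq'; slia.
    move=> i; rewrite sq' => hi.
    rewrite nthq'; last by slia. rewrite nthq'; last by slia.
    rewrite -(pp (i + (t - p))); last by slia.
    have -> : i + (t - p) + p = i + t by slia.
    by apply: k3; slia.
  exists q'; split => //; split.
  - move=> w [ws [hws <-]].
    elim: ws hws => [|u ws IH] /=.
      by move=> _; exists [::].
    case/andP => hu hws; apply: star_cat; last exact: IH.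
    case/(@PsetP _ x0): hu => u0 un ue up.
    case: (ltnP p (size u)) => hpu.
    + exists [:: q0; take (size u - p) q']; split.
        by rewrite /= Pq0 Prest.
      rewrite /= cats0; symmetry; rewrite {1}ue q0e -{1}(subnKC (ltnW hpu)) takeD; congr (_ ++ _).
      apply: (eq_from_nth (x0:=x0)).
        by rewrite !size_take_min size_drop (minn_idPl (leq_subr p n)).
      move=> i; rewrite size_take_min size_drop => hi.
      have hi' : i < size u - p by move: hi; rewrite leq_min => /andP[].
      rewrite [LHS]nth_take // nth_drop [RHS]nth_take; last by [].
      rewrite (addnC p i) pp //; last by slia. by rewrite nthq' //; apply: (leq_trans hi'); apply: leq_sub2r.
    + have hpu' : size u = p by have hh := minp _ u0 un up; slia.
      exists [:: q0]; split; first by rewrite /= Pq0.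
      by rewrite /= cats0 ue hpu' -q0e.
  - exists q'; split.
      exists [:: q']; split; last by rewrite /= cats0.
      rewrite /= andbT.
      rewrite -{2}(take_size q'); apply: (Pset_take (x0:=x0)) => //.
        by rewrite sq'; slia.
      by move=> i; rewrite ltnNge leq_addl.
    move=> [ws [hws hfl]].
    have key : forall ws, all (Pset q) ws -> size (flatten ws) <= n - p ->
               p %| size (flatten ws).
      elim=> [|u us IH] //= /andP[hu hus]; rewrite size_cat => hs.
      case/(@PsetP _ x0): hu => u0 un ue up.
      rewrite dvdn_add //; last by apply: IH => //; slia.
      by apply: mult => //; slia.
    have := key ws hws; rewrite hfl sq' leqnn => /(_ isT) hd.
    move: hndiv; rewrite -(subnK pn) dvdn_addl //; first by rewrite hd.
split => // hmax.
case: (ltnP n (2 * p)) => // h2.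
case: (part1 h2) => q' [q'n [hsub [w [hw hnw]]]].
by exfalso; apply: hnw; apply: (hmax q' q'n hsub).
Qed.

Unset Implicit Arguments. Set Strict Implicit.
Theorem lemma4 (X : finType) (q q0 : seq X) :
  q != [::] ->
  Pset q q0 ->
  (forall v, Pset q v -> size q0 <= size v) ->
  ~~ (size q0 %| size q) ->
  ((2 * size q0 <= size q ->
      exists q' : seq X, q' != [::] /\
        lang_subset (star (Pset q)) (star (Pset q')) /\
        exists w, star (Pset q') w /\ ~ star (Pset q) w)
   /\
   ((forall q' : seq X, q' != [::] ->
       lang_subset (star (Pset q)) (star (Pset q')) ->
       lang_subset (star (Pset q')) (star (Pset q))) ->
    size q < 2 * size q0)).
Proof. exact: lemma4_eq. Qed.
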